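(* Let $\boldsymbol w=(w_{i,j})_{(i,j)\in\mathcal I}$ be a symmetric polygonal array on a symmetric polygonal domain $\mathcal I$, let $n=\#\{i:(i,i)\in\mathcal I\}$ be its diagonal length, and let $\boldsymbol t=\mathrm{gRSK}(\boldsymbol w)$. Then $$4^{\lfloor n/2\rfloor}\prod_{i=1}^n w_{i,i}=\prod_{j=1}^n t_{j,j}^{(-1)^{n-j}}.$$
   Context: A polygonal domain is a finite $\mathcal I\subset\mathbb N\times\mathbb N$ ($\mathbb N=\{1,2,\dots\}$) such that $(i,j)\in\mathcal I$ whenever $(i+1,j)\in\mathcal I$ or $(i,j+1)\in\mathcal I$; a polygonal array on $\mathcal I$ is $(w_{i,j})_{(i,j)\in\mathcal I}$ with positive real entries. $\mathcal I$ is symmetric if $(i,j)\in\mathcal I\iff(j,i)\in\mathcal I$, and $\boldsymbol w$ is symmetric if moreover $w_{i,j}=w_{j,i}$. An index $(i,j)\in\mathcal I$ is a border index if $(i+1,j+1)\notin\mathcal I$, and an outer index if none of $(i+1,j),(i,j+1),(i+1,j+1)$ is in $\mathcal I$. Local moves: $a_{i,j}$ replaces $w_{i,j}$ by $w_{i,j}(w_{i-1,j}+w_{i,j-1})$; for non-border $(i,j)$, $b_{i,j}$ replaces $w_{i,j}$ by $w_{i,j}^{-1}(w_{i-1,j}+w_{i,j-1})(w_{i+1,j}^{-1}+w_{i,j+1}^{-1})^{-1}$; conventions $w_{i,0}=w_{0,j}=0$ except that $w_{0,1}+w_{1,0}$ is interpreted as $1$. For $i\le j$ set $\varrho_{i,j}=a_{i,j}\circ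 b_{i-1,j-1}\circ\cdots\circ b_{1,j-i+1}$, and for $i\ge j$ set $\varrho_{i,j}=a_{i,j}\circ b_{i-1,j-1}\circ\cdots\circ b_{i-j+1,1}$. The geometric RSK map is defined recursively: $\mathrm{gRSK}(\varnothing)=\varnothing$, and with $\mathcal I_{\mathrm{out}}$ the set of outer indices, $\mathcal I^\circ=\mathcal I\setminus\mathcal I_{\mathrm{out}}$, $\boldsymbol w^\circ=(w_{i,j})_{\mathcal I^\circ}$, $\boldsymbol w^{\mathrm{out}}=(w_{i,j})_{\mathcal I_{\mathrm{out}}}$, $\mathrm{gRSK}(\boldsymbol w)$ is obtained by applying all $\varrho_{i,j}$, $(i,j)\in\mathcal I_{\mathrm{out}}$ (composed in any order; the result does not depend on the order), to the array $\mathrm{gRSK}(\boldsymbol w^\circ)\sqcup\boldsymbol w^{\mathrm{out}}$ on $\mathcal I$. *)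

(* Defs.v *)
From HB Require Import structures.
From mathcomp Require Import all_boot all_order all_algebra.
From mathcomp Require Import reals.
Set Implicit Arguments. Unset Strict Implicit. Unset Printing Implicit Defensive.
Import Order.TTheory GRing.Theory Num.Theory.
Local Open Scope ring_scope.

(* An index set is a finite list of pairs (i,j) of positive naturals.
   Arrays are total functions nat -> nat -> R; only values on the domain matter. *)
Definition dom := seq (nat * nat).
Definition arr (R : Type) := nat -> nat -> R.

Definition polygonal_domain (I : dom) : Prop :=
  (forall p, p \in I -> (0 < p.1)%N /\ (0 < p.2)%N) /\
  (forall i j : nat, (0 < i)%N -> (0 < j)%N ->
     ((i.+1, j) \in I \/ (i, j.+1) \in I) -> (i, j) \in I).

Definition symmetric_domain (I : dom) : Prop :=
  forall i j : nat, ((i, j) \in I) = ((j, i) \in I).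

Definition polygonal_array (R : realType) (I : dom) (w : arr R) : Prop :=
  forall i j : nat, (i, j) \in I -> 0 < w i j.

Definition symmetric_array (R : realType) (I : dom) (w : arr R) : Prop :=
  symmetric_domain I /\ forall i j : nat, (i, j) \in I -> w i j = w j i.

Section Moves.
Variable R : realType.

Definition getw (w : arr R) (i j : nat) : R :=
  if (i == 0%N) || (j == 0%N) then 0 else w i j.

(* w_{i-1,j} + w_{i,j-1}, with w_{0,1} + w_{1,0} interpreted as 1 *)
Definition sum_prev (w : arr R) (i j : nat) : R :=
  if (i == 1%N) && (j == 1%N) then 1 else getw w i.-1 j + getw w i j.-1.

Definition upd (w : arr R) (i j : nat) (x : R) : arr R :=
  fun k l => if (k == i) && (l == j) then x else w k l.

Definition move_a (i j : nat) (w : arr R) : arr R :=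
  upd w i j (w i j * sum_prev w i j).

Definition move_b (i j : nat) (w : arr R) : arr R :=
  upd w i j ((w i j)^-1 * sum_prev w i j *
             ((w i.+1 j)^-1 + (w i j.+1)^-1)^-1).

(* rho_{i,j} = a_{i,j} o b_{i-1,j-1} o ... o b_{i-m+1,j-m+1}, m = min i j;
   the rightmost move b_{i-m+1,j-m+1} is applied first. *)
Definition rho (i j : nat) (w : arr R) : arr R :=
  let m := minn i j in
  move_a i j (foldl (fun w' k => move_b (i - m + k) (j - m + k) w') w
                    (iota 1 (m.-1))).

Definition outer_idx (I : dom) : dom :=
  undup [seq p <- I | [&& (p.1.+1, p.2) \notin I, (p.1, p.2.+1) \notin I
                        & (p.1.+1, p.2.+1) \notin I]].

Definition inner_idx (I : dom) : dom :=
  [seq p <- I | p \notin outer_idx I].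

Fixpoint gRSK_fuel (n : nat) (I : dom) (w : arr R) : arr R :=
  match n with
  | 0 => w
  | n'.+1 =>
      let t := gRSK_fuel n' (inner_idx I) w in
      let t' := fun i j => if (i, j) \in outer_idx I then w i j else t i j in
      foldr (fun p acc => rho p.1 p.2 acc) t' (outer_idx I)
  end.

Definition gRSK (I : dom) (w : arr R) : arr R := gRSK_fuel (size I) I w.

End Moves.

Definition diag_length (I : dom) : nat :=
  size (undup [seq p <- I | p.1 == p.2]).

(* Main.v *)
Require Import Defs.
From HB Require Import structures.
From mathcomp Require Import all_boot all_order all_algebra.
From mathcomp Require Import reals.
From mathcomp Require Import zify ring lra.
Import Order.TTheory GRing.Theory Num.Theory.
Local Open Scope ring_scope.
Set Implicit Arguments. Unset Strict Implicit.

Section Aux.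
Variable R : realType.
Implicit Types (u w : arr R) (J : dom).

Definition near (i j a b : nat) : bool :=
  [|| (a + j == b + i)%N, (a + j + 1 == b + i)%N | (a + j == b + i + 1)%N].

Definition loc (i j : nat) (f : arr R -> arr R) :=
  (forall u a b, (a + j != b + i)%N -> f u a b = u a b) /\
  (forall u1 u2, (forall a b, near i j a b -> u1 a b = u2 a b) ->
     forall a b, (a + j = b + i)%N -> f u1 a b = f u2 a b).

Lemma nearE1 i j a b : (a + j = b + i)%N -> near i j a b.
Proof. by move=> E; rewrite /near E eqxx. Qed.
Lemma nearE2 i j a b : (a + j + 1 = b + i)%N -> near i j a b.
Proof. by move=> E; rewrite /near E eqxx orbT. Qed.
Lemma nearE3 i j a b : (a + j = b + i + 1)%N -> near i j a b.
Proof. by move=> E; rewrite /near E eqxx !orbT. Qed.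

Lemma loc_id i j : loc i j id.
Proof. split => // u1 u2 H a b E; apply: H; rewrite /near E eqxx. by []. Qed.

Lemma loc_comp i j f g : loc i j f -> loc i j g -> loc i j (f \o g).
Proof.
move=> [Wf Rf] [Wg Rg]; split.
  by move=> u a b H /=; rewrite Wf // Wg.
move=> u1 u2 H a b E /=; apply: Rf => // a' b' N.
have [E'|E'] := eqVneq (a' + j)%N (b' + i)%N.
  by apply: Rg => //; apply/eqP.
by rewrite !Wg // H.
Qed.

Lemma loc_line i j i' j' f : (i + j' = j + i')%N -> loc i' j' f -> loc i j f.
Proof.
move=> L [W Rd]; split.
  move=> u a b H; apply: W; apply/eqP => E; move/eqP: H; apply; lia.
move=> u1 u2 H a b E; apply: Rd; last by lia.
move=> a' b' N; apply: H; move: N; rewrite /near.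
case/or3P => /eqP N; apply/or3P; [constructor 1|constructor 2|constructor 3]; apply/eqP; lia.
Qed.

Lemma foldl_prop (P : (arr R -> arr R) -> Prop) (g : nat -> arr R -> arr R) s :
  P id -> (forall f h, P f -> P h -> P (f \o h)) -> (forall k, k \in s -> P (g k)) ->
  P (fun u => foldl (fun w k => g k w) u s).
Proof.
move=> Pid Pc; elim: s => [|k s IH] Hs /=; first exact: Pid.
have -> : (fun u => foldl (fun w k0 => g k0 w) (g k u) s) =
          (fun u => foldl (fun w k0 => g k0 w) u s) \o g k by [].
apply: Pc; first by apply: IH => k' K; apply: Hs; rewrite inE K orbT.
by apply: Hs; rewrite inE eqxx.
Qed.

Lemma loc_move_a i j : loc i j (move_a i j).
Proof.
split.
  move=> u a b H; rewrite /move_a /upd.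
  case: ifP => // /andP [/eqP Ea /eqP Eb]; subst; move/eqP: H; lia.
move=> u1 u2 H a b E; rewrite /move_a /upd.
case: ifP => [/andP [/eqP Ea /eqP Eb]|_]; last by apply: H; apply: nearE1.
subst a b; congr (_ * _); first by apply: H; apply: nearE1; lia.
rewrite /sum_prev; case: ifP => // _; rewrite /getw.
congr (_ + _).
  case: ifP => // /norP [Hi Hj]; apply: H; apply: nearE2; lia.
case: ifP => // /norP [Hi Hj]; apply: H; apply: nearE3; lia.
Qed.

Lemma loc_move_b i j : loc i j (move_b i j).
Proof.
split.
  move=> u a b H; rewrite /move_b /upd.
  case: ifP => // /andP [/eqP Ea /eqP Eb]; subst; move/eqP: H; lia.
move=> u1 u2 H a b E; rewrite /move_b /upd.
case: ifP => [/andP [/eqP Ea /eqP Eb]|_]; last by apply: H; apply: nearE1.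
subst a b.
have H0 : u1 i j = u2 i j by apply: H; apply: nearE1; lia.
have H1 : u1 i.+1 j = u2 i.+1 j.
  apply: H; apply: nearE3; lia.
have H2 : u1 i j.+1 = u2 i j.+1.
  apply: H; apply: nearE2; lia.
rewrite H0 H1 H2; congr (_ * _ * _).
rewrite /sum_prev; case: ifP => // _; rewrite /getw.
congr (_ + _).
  case: ifP => // /norP [Hi Hj]; apply: H; apply: nearE2; lia.
case: ifP => // /norP [Hi Hj]; apply: H; apply: nearE3; lia.
Qed.

Lemma loc_rho i j : loc i j (rho i j).
Proof.
rewrite /rho.
have -> : (fun w => move_a i j (foldl (fun w' k => move_b (i - minn i j + k) (j - minn i j + k) w') w
               (iota 1 (minn i j).-1))) =
   move_a i j \o (fun w => foldl (fun w' k => move_b (i - minn i j + k) (j - minn i j + k) w') w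
               (iota 1 (minn i j).-1)) by [].
apply: loc_comp; first exact: loc_move_a.
apply: foldl_prop; [exact: loc_id | exact: loc_comp |].
move=> k _; apply: (loc_line (i' := i - minn i j + k) (j' := j - minn i j + k)).
  have := geq_minl i j; have := geq_minr i j; lia.
exact: loc_move_b.
Qed.


Definition tr (u : arr R) : arr R := fun a b => u b a.

Lemma getw_tr u a b : getw (tr u) a b = getw u b a.
Proof. by rewrite /getw orbC. Qed.

Lemma sum_prev_tr u i j : sum_prev (tr u) j i = sum_prev u i j.
Proof. by rewrite /sum_prev andbC 2!getw_tr addrC. Qed.

Lemma move_a_tr u i j : move_a j i (tr u) = tr (move_a i j u).
Proof.
apply: boolp.funext => a; apply: boolp.funext => b.
by rewrite /move_a /upd /tr sum_prev_tr andbC.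
Qed.

Lemma move_b_tr u i j : move_b j i (tr u) = tr (move_b i j u).
Proof.
apply: boolp.funext => a; apply: boolp.funext => b.
rewrite /move_b /upd sum_prev_tr /tr andbC; case: ifP => // _.
by congr (_ * _); congr (_^-1); exact: addrC.
Qed.

Lemma rho_tr u i j : rho j i (tr u) = tr (rho i j u).
Proof.
rewrite /rho minnC; set m := minn i j.
rewrite -move_a_tr; congr (move_a _ _ _).
elim: (iota 1 m.-1) u => [|k s IH] u //=.
by rewrite move_b_tr IH.
Qed.

Lemma rho_tr_pt u i j a b : rho j i u b a = rho i j (tr u) a b.
Proof. by rewrite -[u]/(tr (tr u)) rho_tr. Qed.

Definition agr J u1 u2 := forall a b, (a, b) \in J -> u1 a b = u2 a b.
Definition posJ J u := forall a b, (a, b) \in J -> 0 < u a b.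

Definition dp J (f : arr R -> arr R) :=
  (forall u1 u2, agr J u1 u2 -> agr J (f u1) (f u2)) /\
  (forall u, posJ J u -> posJ J (f u)).

Lemma dp_id J : dp J id.
Proof. by []. Qed.

Lemma dp_comp J f g : dp J f -> dp J g -> dp J (f \o g).
Proof. move=> [A1 P1] [A2 P2]; split => [u1 u2 H|u H] /=; auto. Qed.

Lemma dc1 J b a' : polygonal_domain J -> (0 < a')%N -> forall d,
  (a' + d, b)%N \in J -> (a', b) \in J.
Proof.
move=> [Hp Hd] Ha'; elim => [|d IH] H; first by rewrite addn0 in H.
apply: IH; have [/= _ Hb] := Hp _ H.
apply: Hd => //; first by rewrite addn_gt0 Ha'.
by left; rewrite -addnS.
Qed.

Lemma dc2 J a b' : polygonal_domain J -> (0 < b')%N -> forall d,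
  (a, b' + d)%N \in J -> (a, b') \in J.
Proof.
move=> [Hp Hd] Hb'; elim => [|d IH] H; first by rewrite addn0 in H.
apply: IH; have [/= Ha _] := Hp _ H.
apply: Hd => //; first by rewrite addn_gt0 Hb'.
by right; rewrite -addnS.
Qed.

Lemma dc J a b a' b' : polygonal_domain J -> (a, b) \in J ->
  (0 < a')%N -> (a' <= a)%N -> (0 < b')%N -> (b' <= b)%N -> (a', b') \in J.
Proof.
move=> PJ H h1 h2 h3 h4.
apply: (dc2 PJ h3 (d := b - b')); rewrite subnKC //.
by apply: (dc1 PJ h1 (d := a - a')); rewrite subnKC.
Qed.

Lemma getw_agr J u1 u2 a b : agr J u1 u2 -> ((a == 0%N) || (b == 0%N) = false -> (a, b) \in J) ->
  getw u1 a b = getw u2 a b.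
Proof. by move=> A H; rewrite /getw; case: ifP => // F; apply: A; apply: H. Qed.

Lemma sp_agr J u1 u2 i j : polygonal_domain J -> (i, j) \in J -> agr J u1 u2 ->
  sum_prev u1 i j = sum_prev u2 i j.
Proof.
move=> PJ H A; have [/= Hi Hj] := PJ.1 _ H.
rewrite /sum_prev; case: ifP => // _; congr (_ + _); apply: (getw_agr A).
  move=> /norP [h1 h2]; apply: (dc PJ H) => //; lia.
move=> /norP [h1 h2]; apply: (dc PJ H) => //; lia.
Qed.

Lemma getw_ge0 J u a b : posJ J u -> ((a == 0%N) || (b == 0%N) = false -> (a, b) \in J) ->
  0 <= getw u a b.
Proof. by move=> P H; rewrite /getw; case: ifP => // F; apply/ltW/P/H. Qed.

Lemma sp_pos J u i j : polygonal_domain J -> (i, j) \in J -> posJ J u ->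
  0 < sum_prev u i j.
Proof.
move=> PJ H P; have [/= Hi Hj] := PJ.1 _ H.
rewrite /sum_prev; case: ifP => // /nandP Hn.
have G1 : 0 <= getw u i.-1 j.
  apply: (getw_ge0 P) => /norP [h1 h2]; apply: (dc PJ H) => //; lia.
have G2 : 0 <= getw u i j.-1.
  apply: (getw_ge0 P) => /norP [h1 h2]; apply: (dc PJ H) => //; lia.
case: Hn => Hn.
  have : 0 < getw u i.-1 j.
    rewrite /getw ifF; last by apply/norP; split; lia.
    apply: P; apply: (dc PJ H) => //; lia.
  move=> G; lra.
have : 0 < getw u i j.-1.
  rewrite /getw ifF; last by apply/norP; split; lia.
  apply: P; apply: (dc PJ H) => //; lia.
move=> G; lra.
Qed.

Lemma dp_move_a J i j : polygonal_domain J -> (i, j) \in J -> dp J (move_a i j).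
Proof.
move=> PJ H; split.
  move=> u1 u2 A a b Hab; rewrite /move_a /upd; case: ifP => [/andP [/eqP Ea /eqP Eb]|_]; first subst a b.
    by rewrite (sp_agr PJ H A) A.
  exact: A.
move=> u P a b Hab; rewrite /move_a /upd; case: ifP => [/andP [/eqP Ea /eqP Eb]|_]; first subst a b.
  by apply: mulr_gt0; [exact: P | exact: sp_pos PJ H P].
exact: P.
Qed.

Lemma dp_move_b J i j : polygonal_domain J -> (i.+1, j) \in J -> (i, j.+1) \in J ->
  dp J (move_b i j).
Proof.
move=> PJ H1 H2.
have [/= Hi _] := PJ.1 _ H2; have [/= _ Hj] := PJ.1 _ H1.
have H : (i, j) \in J by apply: (dc PJ H1); lia.
split.
  move=> u1 u2 A a b Hab; rewrite /move_b /upd; case: ifP => [/andP [/eqP Ea /eqP Eb]|_]; first subst a b.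
    by rewrite (sp_agr PJ H A) !A.
  exact: A.
move=> u P a b Hab; rewrite /move_b /upd; case: ifP => [/andP [/eqP Ea /eqP Eb]|_]; first subst a b.
  apply: mulr_gt0; first apply: mulr_gt0; first by rewrite invr_gt0; exact: P.
    exact: sp_pos PJ H P.
  by rewrite invr_gt0; apply: addr_gt0; rewrite invr_gt0; exact: P.
exact: P.
Qed.

Lemma dp_rho J i j : polygonal_domain J -> (i, j) \in J -> dp J (rho i j).
Proof.
move=> PJ H; have [/= Hi Hj] := PJ.1 _ H.
rewrite /rho.
have -> : (fun w => move_a i j (foldl (fun w' k => move_b (i - minn i j + k) (j - minn i j + k) w') w
               (iota 1 (minn i j).-1))) =
   move_a i j \o (fun w => foldl (fun w' k => move_b (i - minn i j + k) (j - minn i j + k) w') w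
               (iota 1 (minn i j).-1)) by [].
apply: dp_comp; first exact: dp_move_a.
apply: foldl_prop; [exact: dp_id | exact: dp_comp |].
move=> k; rewrite mem_iota => /andP [k1 k2].
have := geq_minl i j; have := geq_minr i j => m1 m2.
apply: dp_move_b => //; apply: (dc PJ H); lia.
Qed.

Definition RF (L : dom) (s : arr R) : arr R := foldr (fun p acc => rho p.1 p.2 acc) s L.

Definition far (p q : nat * nat) :=
  [/\ (p.1 + q.2 <> p.2 + q.1)%N, (p.1 + q.2 + 1 <> p.2 + q.1)%N & (p.1 + q.2 <> p.2 + q.1 + 1)%N].

Lemma RF_off L s a b : (forall q, q \in L -> (a + q.2 <> b + q.1)%N) -> RF L s a b = s a b.
Proof.
elim: L => [|q L IH] //= H.
rewrite (loc_rho q.1 q.2).1; last by apply/eqP; apply: H; rewrite inE eqxx.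
by apply: IH => q' Q; apply: H; rewrite inE Q orbT.
Qed.

Lemma far_near (p q : nat * nat) a b : far p q -> near p.1 p.2 a b -> (a + q.2 <> b + q.1)%N.
Proof.
case: p => p1 p2; case: q => q1 q2 [/= F1 F2 F3].
by rewrite /near => /or3P [] /eqP N; lia.
Qed.

Lemma far_on (p q : nat * nat) a b : far p q -> (a + p.2 = b + p.1)%N -> (a + q.2 != b + q.1)%N.
Proof.
case: p => p1 p2; case: q => q1 q2 [/= F1 F2 F3] E.
by apply/eqP; lia.
Qed.

Lemma RF_on L s p a b : uniq L -> p \in L -> (forall q, q \in L -> q != p -> far p q) ->
  (a + p.2 = b + p.1)%N -> RF L s a b = rho p.1 p.2 s a b.
Proof.
elim: L => [|q L IH] //= /andP [nq U]; rewrite inE => /orP [/eqP Eq|Hp] H E.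
  subst q; apply: (loc_rho p.1 p.2).2 => // a' b' N.
  apply: RF_off => q' Q.
  have F : far p q' by apply: H; rewrite ?inE ?Q ?orbT //; apply: contraNneq nq => <-.
  exact: far_near F N.
have Fq : far p q by apply: H; rewrite ?inE ?eqxx //; apply: contraNneq nq => ->.
rewrite (loc_rho q.1 q.2).1; last exact: far_on Fq E.
apply: IH => // q' Q; apply: H; by rewrite inE Q orbT.
Qed.

Lemma dp_RF J L : polygonal_domain J -> (forall q, q \in L -> q \in J) -> dp J (RF L).
Proof.
move=> PJ; elim: L => [|q L IH] H; first exact: dp_id.
have -> : RF (q :: L) = rho q.1 q.2 \o RF L by [].
apply: dp_comp; first by apply: dp_rho => //; rewrite -surjective_pairing; apply: H; rewrite inE eqxx.
by apply: IH => q' Q; apply: H; rewrite inE Q orbT.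
Qed.

Lemma mem_outer J p : (p \in outer_idx J) =
  (p \in J) && [&& (p.1.+1, p.2) \notin J, (p.1, p.2.+1) \notin J & (p.1.+1, p.2.+1) \notin J].
Proof. by rewrite /outer_idx mem_undup mem_filter andbC. Qed.

Lemma mem_inner J p : (p \in inner_idx J) = (p \in J) && (p \notin outer_idx J).
Proof. by rewrite /inner_idx mem_filter andbC. Qed.

Lemma outer_dom J i j a b : polygonal_domain J -> (i, j) \in outer_idx J -> (a, b) \in J ->
  (i <= a)%N -> (j <= b)%N -> a = i /\ b = j.
Proof.
move=> PJ; rewrite mem_outer /= => /and4P [H N1 N2 N3] Hab Ha Hb.
have [/= Hi Hj] := PJ.1 _ H.
have [E|E] := eqVneq a i; have [E'|E'] := eqVneq b j => //.
- by move/negP: N2; case; apply: (dc PJ Hab); lia.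
- by move/negP: N1; case; apply: (dc PJ Hab); lia.
- by move/negP: N1; case; apply: (dc PJ Hab); lia.
Qed.

Lemma outer_far J p q : polygonal_domain J -> p \in outer_idx J -> q \in outer_idx J ->
  q != p -> far p q.
Proof.
case: p => i j; case: q => i' j' PJ Hp Hq Nq.
have Hp' : (i, j) \in J by move: Hp; rewrite mem_outer => /andP [].
have Hq' : (i', j') \in J by move: Hq; rewrite mem_outer => /andP [].
have [/= Hi Hj] := PJ.1 _ Hp'; have [/= Hi' Hj'] := PJ.1 _ Hq'.
have D1 := outer_dom PJ Hp; have D2 := outer_dom PJ Hq.
have NE : ~ (i' = i /\ j' = j) by case=> E1 E2; subst; rewrite eqxx in Nq.
rewrite /far /=; split => E.
- have [L|L] := leqP i i'.
    by move: (D1 i' j' Hq'); lia.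
  by move: (D2 i j Hp'); lia.
- have [L|L] := leqP i.+1 i'.
    have M : (i.+1, j) \in J by apply: (dc PJ Hq'); lia.
    by move: (D1 _ _ M); lia.
  have M : (i', j'.+1) \in J by apply: (dc PJ Hp'); lia.
  by move: (D2 _ _ M); lia.
- have [L|L] := leqP i i'.
    have M : (i, j.+1) \in J by apply: (dc PJ Hq'); lia.
    by move: (D1 _ _ M); lia.
  have M : (i'.+1, j') \in J by apply: (dc PJ Hp'); lia.
  by move: (D2 _ _ M); lia.
Qed.

Lemma outer_sym J i j : symmetric_domain J -> ((i, j) \in outer_idx J) = ((j, i) \in outer_idx J).
Proof.
move=> S; rewrite !mem_outer /= S.
by rewrite (S i.+1) (S i) (S i.+1 j.+1); case: ((j, i) \in J) => //=; bool_congr.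
Qed.

Lemma inner_poly J : polygonal_domain J -> polygonal_domain (inner_idx J).
Proof.
move=> PJ; split.
  by move=> p; rewrite mem_inner => /andP [H _]; apply: PJ.1.
move=> i j Hi Hj H; rewrite mem_inner.
have H' : (i.+1, j) \in J \/ (i, j.+1) \in J.
  by case: H; rewrite mem_inner => /andP [H _]; [left|right].
rewrite PJ.2 //= mem_outer /= negb_and; apply/orP; right.
by case: H' => [->|->]; rewrite /= ?andbF.
Qed.

Lemma inner_sym J : symmetric_domain J -> symmetric_domain (inner_idx J).
Proof. by move=> S i j; rewrite !mem_inner S outer_sym. Qed.

Lemma outer_exists J : polygonal_domain J -> J != [::] -> exists p, p \in outer_idx J.
Proof.
move=> PJ NJ.
have : exists p, p \in J /\ forall q, q \in J -> (q.1 + q.2 <= p.1 + p.2)%N.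
  elim: J NJ {PJ} => // x J IH _.
  case: (eqVneq J [::]) => [->|NJ].
    by exists x; split; rewrite ?inE ?eqxx // => q; rewrite inE => /eqP ->.
  have [p [Hp Hm]] := IH NJ.
  have [L|L] := leqP (x.1 + x.2) (p.1 + p.2).
    exists p; split; first by rewrite inE Hp orbT.
    by move=> q; rewrite inE => /orP [/eqP ->|Q] //; apply: Hm.
  exists x; split; first by rewrite inE eqxx.
  move=> q; rewrite inE => /orP [/eqP ->|Q] //.
  exact: leq_trans (Hm q Q) (ltnW L).
case=> p [Hp Hm]; exists p; rewrite mem_outer Hp /=.
apply/and3P; split; apply/negP => /Hm /=; lia.
Qed.

Lemma size_inner J : polygonal_domain J -> J != [::] -> (size (inner_idx J) < size J)%N.
Proof.
move=> PJ NJ; have [p Hp] := outer_exists PJ NJ.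
have Hp' : p \in J by move: Hp; rewrite mem_outer => /andP [].
rewrite /inner_idx size_filter -(count_predC (fun q => q \notin outer_idx J) J).
rewrite -{1}[count _ _]addn0 ltn_add2l -has_count; apply/hasP; exists p => //=.
by rewrite Hp.
Qed.

Lemma dl_eq J N : (forall p, p \in J -> (0 < p.1)%N) ->
  (forall k, ((k, k) \in J) = (0 < k <= N)%N) -> diag_length J = N.
Proof.
move=> Pos H; rewrite /diag_length.
have -> : N = size [seq (k, k) | k <- iota 1 N] by rewrite size_map size_iota.
apply: perm_size; apply: uniq_perm; first exact: undup_uniq.
  by rewrite map_inj_uniq ?iota_uniq // => x y [].
case=> a b; rewrite mem_undup mem_filter /=.
apply/idP/idP.
  case/andP => /eqP <- Hab; apply/mapP; exists a => //.
  by rewrite mem_iota -H Hab; have := H a; rewrite Hab; lia.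
case/mapP => k; rewrite mem_iota => Hk [-> ->]; rewrite eqxx H /=; lia.
Qed.

Lemma diag_char J : polygonal_domain J ->
  forall k, ((k, k) \in J) = (0 < k <= diag_length J)%N.
Proof.
move=> PJ.
suff [N HN] : exists N, forall k, ((k, k) \in J) = (0 < k <= N)%N.
  by rewrite (dl_eq (N := N)) // => p /PJ.1 [].
have [M HM] : exists M, forall k, (k, k) \in J -> (k <= M)%N.
  clear PJ; elim: J => [|q J [M IH]]; first by exists 0%N.
  exists (maxn M q.1) => k; rewrite inE => /orP [/eqP Eq|Q].
    by rewrite -Eq /= leq_maxr.
  exact: leq_trans (IH k Q) (leq_maxl _ _).
elim: M HM => [|M IH] HM.
  exists 0%N => k; apply/idP/idP; last lia.
  move=> H; have := HM _ H; have := PJ.1 _ H; simpl; lia.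
case E : ((M.+1, M.+1) \in J).
  exists M.+1 => k; apply/idP/idP.
    by move=> H; have := HM _ H; have := PJ.1 _ H; simpl; lia.
  by move=> Hk; apply: (dc PJ E); lia.
apply: IH => k H; have := HM _ H.
move=> Hk; case: (eqVneq k M.+1) => [Ek|Nk]; last lia.
by move: H; rewrite Ek E.
Qed.

Fixpoint Pf (K : nat) (f : nat -> R) : R := if K is K'.+1 then f K'.+1 / Pf K' f else 1.

Lemma Pf_ext K f g : (forall k, (0 < k <= K)%N -> f k = g k) -> Pf K f = Pf K g.
Proof.
elim: K => [|K IH] H //=.
rewrite H; last lia.
by rewrite IH // => k Hk; apply: H; lia.
Qed.

Lemma Pf_pos K f : (forall k, (0 < k <= K)%N -> 0 < f k) -> 0 < Pf K f.
Proof.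
elim: K => [|K IH] H //=; apply: divr_gt0; first by apply: H; lia.
by apply: IH => k Hk; apply: H; lia.
Qed.

Lemma prod_Pf n f : (forall k, (0 < k <= n)%N -> f k != 0) ->
  \prod_(1 <= j < n.+1) f j ^ (((-1) ^+ (n - j))%R : int) = Pf n f.
Proof.
elim: n => [|n IH] H; first by rewrite big_geq.
rewrite big_nat_recr //= subnn expr0 expr1z mulrC.
congr (_ * _).
rewrite -IH; last by move=> k Hk; apply: H; lia.
rewrite -prodfV; apply: eq_big_nat => j Hj.
by rewrite subSn ?exprS ?mulN1r ?invr_expz //; lia.
Qed.

Definition xf (s : arr R) (k : nat) : R :=
  (s k k)^-1 * (if k == 1%N then 1 else s k.-1 k + s k k.-1) * ((s k.+1 k)^-1 + (s k k.+1)^-1)^-1.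

Definition Wf (s : arr R) K := foldl (fun w' k => move_b (0 + k) (0 + k) w') s (iota 1 K).

Lemma Wf_S s K : Wf s K.+1 = move_b (0 + K.+1) (0 + K.+1) (Wf s K).
Proof.
rewrite /Wf.
have -> : iota 1 K.+1 = iota 1 K ++ [:: K.+1].
  by have := iotaD 1 K 1; rewrite addn1 add1n.
by rewrite foldl_cat.
Qed.

Lemma Winv (s : arr R) K :
  [/\ (forall a b, a != b -> Wf s K a b = s a b),
      (forall a, (K < a)%N -> Wf s K a a = s a a) &
      (forall k, (0 < k <= K)%N -> Wf s K k k = xf s k)].
Proof.
elim: K => [|K [IH1 IH2 IH3]].
  by split => // k; lia.
rewrite Wf_S.
set V := Wf s K in IH1 IH2 IH3 *.
split.
- move=> a b Nab; rewrite /move_b /upd; case: ifP => [/andP [/eqP Ea /eqP Eb]|_].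
    by subst; rewrite eqxx in Nab.
  exact: IH1.
- move=> a Ha; rewrite /move_b /upd ifF; first by apply: IH2; lia.
  apply/negbTE; rewrite negb_and; apply/orP; left; apply/eqP; lia.
- move=> k Hk; rewrite /move_b /upd.
  case: ifP => [/andP [/eqP Ea _]|F].
    subst k; rewrite /xf add0n IH2 // IH1; last by apply/eqP; lia.
    rewrite IH1; last by apply/eqP; lia.
    congr (_ * _ * _); rewrite /sum_prev andbb; case: ifP => // E1.
    rewrite /getw /= !ifF /=; try by move/eqP: E1; lia.
    rewrite !IH1 //; apply/eqP; lia.
  have Hk' : (0 < k <= K)%N.
    move: F Hk; rewrite add0n andbb => /negbT/eqP F Hk; lia.
  exact: IH3.
Qed.

Lemma rho_diag (s : arr R) n : (0 < n)%N ->
  (forall k, (0 < k < n)%N -> rho n n s k k = xf s k) /\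
  rho n n s n n = s n n * (if n == 1%N then 1 else s n.-1 n + s n n.-1).
Proof.
move=> Hn; rewrite /rho /= minnn subnn.
have [W1 W2 W3] := Winv s n.-1.
rewrite -/(Wf s n.-1).
set V := Wf s n.-1 in W1 W2 W3 *.
split.
  move=> k Hk; rewrite /move_a /upd ifF; first by apply: W3; lia.
  apply/negbTE; rewrite negb_and; apply/orP; left; apply/eqP; lia.
rewrite /move_a /upd !eqxx /= W2; last by lia.
congr (_ * _); rewrite /sum_prev andbb; case: ifP => // E1.
rewrite /getw !ifF; last by apply/norP; split; apply/eqP; move/eqP: E1; lia.
  rewrite !W1 //; apply/eqP; lia.
by apply/norP; split; apply/eqP; move/eqP: E1; lia.
Qed.

Lemma pf_outer (s : arr R) n : (0 < n)%N ->
  (forall k, (0 < k <= n)%N -> 0 < s k k) ->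
  (forall k, (0 < k < n)%N -> 0 < s k k.+1 /\ s k.+1 k = s k k.+1) ->
  Pf n (fun k => rho n n s k k) = (if odd n.-1 then 4 else 1) * s n n * Pf n.-1 (fun k => s k k).
Proof.
move=> Hn Hd He.
have [R1 R2] := rho_diag s Hn.
have PP : forall K, (K < n)%N -> 0 < Pf K (fun k => s k k).
  by move=> K HK; apply: Pf_pos => k Hk; apply: Hd; lia.
have Hy : forall K, (0 < K < n)%N ->
    Pf K (fun k => rho n n s k k) = s K K.+1 * (Pf K (fun k => s k k))^-1 * (if odd K then 2^-1 else 2).
  elim => [|K IH] HK; first lia.
  rewrite /= R1 // /xf.
  have [e1 e2] := He K.+1 HK.
  have d1 := Hd K.+1 (ltac:(lia)).
  rewrite e2.
  case: (posnP K) => [K0|K0].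
    subst K => /=; field.
    by apply/andP; split; rewrite lt0r_neq0.
  rewrite IH; last by lia.
  have [e3 e4] := He K (ltac:(lia)).
  have p1 := PP K (ltac:(lia)).
  have -> : (K.+1 == 1%N) = false by apply/negbTE; lia.
  rewrite /= e4.
  case: (odd K) => /=; field;
    by rewrite ?lt0r_neq0 //= ?mulf_neq0 ?lt0r_neq0 ?invr_gt0 //.
move: Hn Hd He R1 R2 PP Hy; case: n => [|m] // _ Hd He R1 R2 PP Hy.
rewrite [LHS]/= R2 /=.
case: (posnP m) => [m0|m0].
  by subst m => /=; field.
rewrite Hy; last by lia.
have [e1 e2] := He m (ltac:(lia)).
have p1 := PP m (ltac:(lia)).
have d1 := Hd m.+1 (ltac:(lia)).
have -> : (m.+1 == 1%N) = false by apply/negbTE; lia.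
rewrite /= e2.
case: (odd m) => /=; field;
  by rewrite ?lt0r_neq0 //= ?mulf_neq0 ?lt0r_neq0 ?invr_gt0 //.
Qed.

Lemma arith_final (m : nat) (w : arr R) :
  (if odd m then 4 else 1) * w m.+1 m.+1 * (4 ^+ m./2 * \prod_(1 <= i < m.+1) w i i) =
  4 ^+ (m.+1)./2 * \prod_(1 <= i < m.+2) w i i.
Proof.
rewrite [in RHS]big_nat_recr //=.
have -> : uphalf m = (odd m + m./2)%N by rewrite uphalf_half.
rewrite exprD; case: (odd m) => /=; rewrite ?expr1 ?expr0; ring.
Qed.

End Aux.

Section Main.
Variable R : realType.

Lemma stage (J : dom) (w t : arr R) :
  polygonal_domain J -> symmetric_domain J -> posJ J w ->
  (forall a b, (a, b) \in J -> w a b = w b a) ->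
  posJ (inner_idx J) t -> (forall a b, (a, b) \in inner_idx J -> t a b = t b a) ->
  Pf (diag_length (inner_idx J)) (fun k => t k k) =
    4 ^+ (diag_length (inner_idx J))./2 * \prod_(1 <= i < (diag_length (inner_idx J)).+1) w i i ->
  let s := fun i j => if (i, j) \in outer_idx J then w i j else t i j in
  let F := RF (outer_idx J) s in
  posJ J F /\ (forall a b, (a, b) \in J -> F a b = F b a) /\
  Pf (diag_length J) (fun k => F k k) =
    4 ^+ (diag_length J)./2 * \prod_(1 <= i < (diag_length J).+1) w i i.
Proof.
move=> PJ SJ Pw Sw Pt St Dt s F.
set L := outer_idx J.
have LJ : forall q, q \in L -> q \in J by move=> q; rewrite mem_outer => /andP [].
have UL : uniq L by exact: undup_uniq.
have FL : forall p q, p \in L -> q \in L -> q != p -> far p q.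
  by move=> p q Hp Hq N; apply: (outer_far PJ).
have inJ : forall a b, (a, b) \in J -> (a, b) \notin L -> (a, b) \in inner_idx J.
  by move=> a b H N; rewrite mem_inner H.
have Ps : posJ J s.
  move=> a b H; rewrite /s; case: ifP => O; first exact: Pw.
  by apply: Pt; apply: inJ => //; rewrite O.
have Ss : forall a b, (a, b) \in J -> s a b = s b a.
  move=> a b H; rewrite /s -outer_sym //; case: ifP => O; first exact: Sw.
  by apply: St; apply: inJ => //; rewrite /L outer_sym // O.
have [AF PF] := dp_RF R PJ LJ.
split; first exact: PF.
split.
  move=> a b H.
  case: (boolP (has (fun q => a + q.2 == b + q.1)%N L)).
    case/hasP => p Hp /eqP Ep.
    have Hp' : (p.2, p.1) \in L by rewrite /L -outer_sym // -surjective_pairing.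
    have E1 : F a b = rho p.1 p.2 s a b := RF_on s UL Hp (fun q Q N => FL p q Hp Q N) Ep.
    have E2 : F b a = rho p.2 p.1 s b a := RF_on s UL Hp' (fun q Q N => FL _ q Hp' Q N) (esym Ep).
    rewrite E1 E2.
    rewrite [RHS]rho_tr_pt.
    have Ag : agr J (tr s) s by move=> x y Hxy; rewrite /tr Ss // SJ.
    have Hpj : (p.1, p.2) \in J by rewrite -surjective_pairing; exact: LJ.
    have [A2 _] := dp_rho R PJ Hpj.
    by rewrite (A2 _ _ Ag a b H).
  move=> NH.
  have E1 : F a b = s a b.
    apply: RF_off => q Q E; move/hasP: NH; apply; exists q => //; exact/eqP.
  have E2 : F b a = s b a.
    apply: RF_off => q Q E; move/hasP: NH; apply.
    exists (q.2, q.1); first by rewrite /L -outer_sym // -surjective_pairing.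
    by apply/eqP => /=; lia.
  by rewrite E1 E2; apply: Ss.
set n := diag_length J.
have DJ := diag_char PJ.
have DI := diag_char (inner_poly PJ).
have PI : forall p, p \in inner_idx J -> (0 < p.1)%N.
  by move=> p /(inner_poly PJ).1 [].
case: (boolP ((n, n) \in L)) => Hn.
  have n0 : (0 < n)%N by have [] := PJ.1 _ (LJ _ Hn).
  have NDk : forall k, (0 < k < n)%N -> (k, k) \notin L.
    move=> k Hk; rewrite mem_outer /= negb_and; apply/orP; right.
    rewrite !negb_and; apply/orP; right; apply/orP; right; rewrite negbK.
    by rewrite DJ; lia.
  have dI : diag_length (inner_idx J) = n.-1.
    apply: dl_eq => // k; rewrite mem_inner DJ.
    case: (eqVneq k n) => [->|Nk]; first by rewrite Hn andbF; lia.
    case: (boolP (0 < k <= n)%N) => Hk /=.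
      by rewrite NDk; lia.
    lia.
  rewrite dI in Dt.
  have -> : Pf n (fun k => F k k) = Pf n (fun k => rho n n s k k).
    apply: Pf_ext => k Hk.
    exact: (RF_on s UL Hn (fun q Q N => FL _ q Hn Q N) (erefl _)).
  rewrite pf_outer //; first last.
  - move=> k Hk.
    have Hk1 : (k, k.+1) \in J by apply: (dc PJ (a := k.+1) (b := k.+1)); rewrite ?DJ; lia.
    by split; [exact: Ps | rewrite Ss // SJ].
  - by move=> k Hk; apply: Ps; rewrite DJ.
  have -> : s n n = w n n by rewrite /s Hn.
  have -> : Pf n.-1 (fun k => s k k) = Pf n.-1 (fun k => t k k).
    by apply: Pf_ext => k Hk; rewrite /s ifF //; apply/negbTE; apply: NDk; lia.
  rewrite Dt.
  case: n n0 {Hn NDk dI Dt} => [|m] // _.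
  exact: arith_final.
have ND : forall k, (k, k) \notin L.
  move=> k; apply/negP => Hk.
  have Hk' := LJ _ Hk; move: (Hk'); rewrite DJ => Hkn.
  case: (eqVneq k n) => [Ek|Nk]; first by rewrite -Ek Hk in Hn.
  move: Hk; rewrite mem_outer /= => /and4P [_ _ _ /negP]; apply.
  by rewrite DJ; lia.
have dI : diag_length (inner_idx J) = n.
  by apply: dl_eq => // k; rewrite mem_inner ND andbT DJ.
rewrite dI in Dt; rewrite -Dt.
apply: Pf_ext => k Hk.
have -> : F k k = s k k.
  apply: RF_off => q Q E.
  have Eq : q.2 = q.1 by lia.
  by move: Q; rewrite [q]surjective_pairing Eq; apply/negP; apply: ND.
by rewrite /s ifF //; apply/negbTE.
Qed.

Lemma main_ind (w : arr R) fuel : forall J, (size J <= fuel)%N ->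
  polygonal_domain J -> symmetric_domain J -> posJ J w ->
  (forall a b, (a, b) \in J -> w a b = w b a) ->
  posJ J (gRSK_fuel fuel J w) /\
  (forall a b, (a, b) \in J -> gRSK_fuel fuel J w a b = gRSK_fuel fuel J w b a) /\
  Pf (diag_length J) (fun k => gRSK_fuel fuel J w k k) =
    4 ^+ (diag_length J)./2 * \prod_(1 <= i < (diag_length J).+1) w i i.
Proof.
elim: fuel => [|fuel IH] J HS PJ SJ Pw Sw.
  move: HS; rewrite leqn0 => /nilP -> /=.
  split; first by [].
  split; first by [].
  have -> : diag_length [::] = 0%N by [].
  by rewrite /= big_geq // expr0 mul1r.
have HS' : (size (inner_idx J) <= fuel)%N.
  case: (eqVneq J [::]) => [->|NJ]; first by [].
  by have := size_inner PJ NJ; lia.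
have PwI : posJ (inner_idx J) w.
  by move=> a b; rewrite mem_inner => /andP [H _]; apply: Pw.
have SwI : forall a b, (a, b) \in inner_idx J -> w a b = w b a.
  by move=> a b; rewrite mem_inner => /andP [H _]; apply: Sw.
have [Pt [St Dt]] := IH _ HS' (inner_poly PJ) (inner_sym SJ) PwI SwI.
exact: (stage PJ SJ Pw Sw Pt St Dt).
Qed.

End Main.

Unset Implicit Arguments.

Theorem proposition2p5 (R : realType) (I : dom) (w : arr R) :
  polygonal_domain I -> polygonal_array I w -> symmetric_array I w ->
  let n := diag_length I in
  let t := gRSK I w in
  4 ^+ (n./2) * \prod_(1 <= i < n.+1) w i i
  = \prod_(1 <= j < n.+1) t j j ^ (((-1) ^+ (n - j))%R : int).
Proof.
move=> PI Pw [SI Sw] n t.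
have [Pt [_ Dt]] := main_ind (leqnn (size I)) PI SI Pw Sw.
rewrite prod_Pf.
  by rewrite /t /gRSK Dt.
move=> k Hk; rewrite lt0r_neq0 //; apply: Pt.
by rewrite (diag_char PI).
Qed.
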